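(* Let $G$ be a group and $a\in G$. The following are equivalent: (1) $a$ has infinite order; (2) there exist disjoint subsets $E_1,E_2$ of $G$ such that $aE_1\subseteq E_1$ and $aE_2\cap E_1\neq\emptyset$.
   Context: Here $aE=\{ax:x\in E\}$ denotes left translation in $G$. *)

(* Defs.v *)
From HB Require Import structures.
Set Implicit Arguments. Unset Strict Implicit.
From mathcomp Require Import all_boot monoid.
From mathcomp Require Import classical_sets.
Definition ltrans {G : groupType} (a : G) (E : set G) : set G :=
  [set (a * x)%g | x in E].
Definition infinite_order {G : groupType} (a : G) : Prop :=
  forall n : nat, (0 < n)%N -> (a ^+ n)%g <> 1%g.

(* Main.v *)
Require Import Defs.
From mathcomp Require Import all_boot monoid.
From mathcomp Require Import classical_sets.
Local Open Scope classical_set_scope.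

Theorem mainTheorem12 (G : groupType) (a : G) :
  infinite_order a <->
  exists E1 E2 : set G,
    E1 `&` E2 = set0 /\ ltrans a E1 `<=` E1 /\ ltrans a E2 `&` E1 !=set0.
Proof.
split.
- move=> Hinf.
  exists [set x | exists n, (0 < n)%N /\ x = (a ^+ n)%g], [set 1%g].
  split; [|split].
  + apply/seteqP; split => x //= [[n [Hn ->]] H1].
    exact: (Hinf n Hn H1).
  + move=> x [y [n [Hn ->]] <-]; exists n.+1; split => //.
    by rewrite expgS.
  + exists a; split; first by exists 1%g => //; rewrite mulg1.
    by exists 1%N.
- move=> [E1 [E2 [Hdis [Hsub [z [[y Hy <-] Hz]]]]]] n Hn Han.
  have Hk : forall k x, E1 x -> E1 ((a ^+ k) * x)%g.
    elim=> [|k IH] x Hx; first by rewrite expg0 mul1g.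
    rewrite expgS -mulgA; apply: Hsub; exists ((a ^+ k) * x)%g => //.
    exact: IH.
  case: n Hn Han => [//|m] _ Ham.
  have := Hk m _ Hz.
  rewrite mulgA -expgSr Ham mul1g => HyE1.
  have : (E1 `&` E2) y by split.
  by rewrite Hdis.
Qed.
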